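(* Let $N_1,N_2$ be positive integers and let $\mathbf K_1\in\mathbb C^{N_1\times N_1}$, $\mathbf K_2\in\mathbb C^{N_2\times N_2}$ be constant invertible matrices having no eigenvalue in common. Let $\mathbf x=(x_n)_{n\in\mathbb Z}$ be infinitely many independent complex variables, and let $\mathbf M_1$ ($N_1\times N_2$), $\mathbf M_2$ ($N_2\times N_1$), $\mathbf r_i,\mathbf s_i$ ($N_i\times 1$ column vectors, $i=1,2$) be functions of $\mathbf x$. Put $$\mathbf K=\begin{pmatrix}\mathbf K_1&0\\0&\mathbf K_2\end{pmatrix},\ \mathbf M=\begin{pmatrix}0&\mathbf M_1\\ \mathbf M_2&0\end{pmatrix},\ \mathbf A=\begin{pmatrix}\mathbf I_{N_1}&0\\0&-\mathbf I_{N_2}\end{pmatrix},\ \mathbf r=\begin{pmatrix}\mathbf r_1&0\\0&\mathbf r_2\end{pmatrix},\ \mathbf s=\begin{pmatrix}0&\mathbf s_1\\ \mathbf s_2&0\end{pmatrix},$$ and assume the Sylvester equation $\mathbf K\mathbf M-\mathbf M\mathbf K=\mathbf r\mathbf s^T$ and the dispersion relations $\mathbf r_{x_n}=\mathbf A\mathbf K^n\mathbf r$, $\mathbf s_{x_n}=\mathbf A(\mathbf K^T)^n\mathbf s$ for all $n\in\mathbb Z$. Assume $\mathbf I+\mathbf M$ is invertible ($\mathbf I$ the identity of order $N_1+N_2$). Define the $2\times2$ matrices $$\mathbf u=\mathbf s^T(\mathbf I+\mathbf M)^{-1}\mathbf r,\qquad \mathbf v=\mathbf I_2-\mathbf s^T(\mathbf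 I+\mathbf M)^{-1}\mathbf K^{-1}\mathbf r.$$ Then for every $n\in\mathbb Z$, $$\mathbf v_{x_{n+1}}\mathbf v^{-1}=-\mathbf u_{x_n}.$$
   Context: Subscripts $x_n$ denote partial derivatives with respect to $x_n$. $\mathbf I_{k}$ denotes the $k\times k$ identity matrix. *)

(* Defs.v *)
From HB Require Import structures.
From mathcomp Require Import all_boot all_order all_algebra.
From mathcomp Require Import complex.
From mathcomp Require Import reals.
Set Implicit Arguments. Unset Strict Implicit. Unset Printing Implicit Defensive.
Import Order.TTheory GRing.Theory Num.Theory.
Local Open Scope ring_scope.

Definition shift_coord (C : Type) (addC : C -> C -> C)
  (x : int -> C) (n : int) (h : C) : int -> C :=
  fun m => if m == n then addC (x m) h else x m.

Definition has_pderiv (R : realType) (p q : nat)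
  (f : (int -> R[i]) -> 'M[R[i]]_(p, q)) (n : int) (x : int -> R[i])
  (D : 'M[R[i]]_(p, q)) : Prop :=
  forall (a : 'I_p) (b : 'I_q) (eps : R[i]), 0 < eps ->
    exists2 delta : R[i], 0 < delta &
      forall h : R[i], h != 0 -> `|h| < delta ->
        `|(f (shift_coord +%R x n h) a b - f x a b) / h - D a b| < eps.

Definition mxpown (F : fieldType) (m : nat) (K : 'M[F]_m) (k : nat) : 'M[F]_m :=
  iter k (mulmx K) 1%:M.

Definition mxpowz (F : fieldType) (m : nat) (K : 'M[F]_m) (z : int) : 'M[F]_m :=
  match z with
  | Posz k => mxpown K k
  | Negz k => mxpown (invmx K) k.+1
  end.

(* Main.v *)
Require Import Defs.
From HB Require Import structures.
From mathcomp Require Import all_boot all_order all_algebra.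
From mathcomp Require Import complex.
From mathcomp Require Import reals.
From mathcomp Require Import ring lra fingroup perm zify.
Set Implicit Arguments. Unset Strict Implicit. Unset Printing Implicit Defensive.
Import Order.TTheory GRing.Theory Num.Theory.
Local Open Scope ring_scope.

Definition Nc (R : rcfType) (z : R[i]) : R := complex.Re `|z|.

Lemma NcE (R : rcfType) (z : R[i]) : `|z| = ((Nc z)%:C)%C.
Proof. by rewrite /Nc RRe_real // normr_real. Qed.

Lemma Nc_ge0 (R : rcfType) (z : R[i]) : 0 <= Nc z.
Proof. by rewrite -lecR -NcE; exact: normr_ge0. Qed.

Lemma NcD (R : rcfType) (x y : R[i]) : Nc (x + y) <= Nc x + Nc y.
Proof. by rewrite -lecR raddfD /= -!NcE ler_normD. Qed.

Lemma NcM (R : rcfType) (x y : R[i]) : Nc (x * y) = Nc x * Nc y.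
Proof. by apply: (@complexI R); rewrite rmorphM /= -!NcE normrM. Qed.

Lemma NcN (R : rcfType) (x : R[i]) : Nc (- x) = Nc x.
Proof. by rewrite /Nc normrN. Qed.


Lemma Nc_eq0 (R : rcfType) (x : R[i]) : (Nc x == 0) = (x == 0).
Proof.
apply/idP/idP => [/eqP h|/eqP ->]; last by rewrite /Nc normr0.
by rewrite -normr_eq0 NcE h.
Qed.

Lemma NcV (R : rcfType) (x : R[i]) : Nc (x^-1) = (Nc x)^-1.
Proof.
have [->|x0] := eqVneq x 0; first by rewrite invr0 /Nc normr0 invr0.
apply: (@complexI R); rewrite rmorphV ?unitfE ?Nc_eq0 //= -!NcE normrV ?unitfE //.
Qed.

Lemma NcB (R : rcfType) (x y : R[i]) : Nc (x - y) = Nc (y - x).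
Proof. by rewrite -NcN opprB. Qed.

Definition lim0 (R : rcfType) (g : R[i] -> R[i]) (l : R[i]) : Prop :=
  forall e : R, 0 < e -> exists2 d : R, 0 < d &
    forall h, h != 0 -> Nc h < d -> Nc (g h - l) < e.

Lemma lim0_ext (R : rcfType) (g1 g2 : R[i] -> R[i]) l :
  (forall h, h != 0 -> g1 h = g2 h) -> lim0 g1 l -> lim0 g2 l.
Proof.
move=> e12 H e e0; have [d d0 Hd] := H e e0; exists d => // h h0 hd.
by rewrite -e12 //; apply: Hd.
Qed.

Lemma lim0_const (R : rcfType) (c : R[i]) : lim0 (fun _ => c) c.
Proof. by move=> e e0; exists 1 => // h _ _; rewrite subrr /Nc normr0. Qed.

Lemma lim0_id (R : rcfType) : lim0 (fun h : R[i] => h) 0.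
Proof. by move=> e e0; exists e => // h _; rewrite subr0. Qed.

Lemma lim0_add (R : rcfType) (g1 g2 : R[i] -> R[i]) l1 l2 :
  lim0 g1 l1 -> lim0 g2 l2 -> lim0 (fun h => g1 h + g2 h) (l1 + l2).
Proof.
move=> H1 H2 e e0.
have e20 : 0 < e / 2 by rewrite divr_gt0.
have [d1 d10 Hd1] := H1 _ e20; have [d2 d20 Hd2] := H2 _ e20.
exists (Num.min d1 d2); first by rewrite lt_min d10 d20.
move=> h h0; rewrite lt_min => /andP[hd1 hd2].
have := Hd1 h h0 hd1; have := Hd2 h h0 hd2.
have -> : g1 h + g2 h - (l1 + l2) = (g1 h - l1) + (g2 h - l2) by ring.
have := NcD (g1 h - l1) (g2 h - l2); lra.
Qed.

Lemma lim0_opp (R : rcfType) (g : R[i] -> R[i]) l :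
  lim0 g l -> lim0 (fun h => - g h) (- l).
Proof.
move=> H e e0; have [d d0 Hd] := H e e0; exists d => // h h0 hd.
by rewrite -opprD NcN; apply: Hd.
Qed.

Lemma lim0_mul (R : rcfType) (g1 g2 : R[i] -> R[i]) l1 l2 :
  lim0 g1 l1 -> lim0 g2 l2 -> lim0 (fun h => g1 h * g2 h) (l1 * l2).
Proof.
move=> H1 H2 e e0.
set L1 := Nc l1; set L2 := Nc l2.
have L10 : 0 <= L1 by apply: Nc_ge0.
have L20 : 0 <= L2 by apply: Nc_ge0.
set t := Num.min 1 (e / (1 + L1 + L2)).
have t0 : 0 < t by rewrite lt_min ltr01 divr_gt0 //; lra.
have t1 : t <= 1 by rewrite ge_min lexx.
have te : t * (1 + L1 + L2) <= e.
  have : t <= e / (1 + L1 + L2) by rewrite ge_min lexx orbT.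
  by rewrite ler_pdivlMr //; lra.
have [d1 d10 Hd1] := H1 _ t0; have [d2 d20 Hd2] := H2 _ t0.
exists (Num.min d1 d2); first by rewrite lt_min d10 d20.
move=> h h0; rewrite lt_min => /andP[hd1 hd2].
have a1 := Hd1 h h0 hd1; have b1 := Hd2 h h0 hd2.
set a := Nc (g1 h - l1) in a1 *; set b := Nc (g2 h - l2) in b1 *.
have a0 : 0 <= a by apply: Nc_ge0.
have b0 : 0 <= b by apply: Nc_ge0.
have -> : g1 h * g2 h - l1 * l2 =
   (g1 h - l1) * (g2 h - l2) + (l1 * (g2 h - l2) + (g1 h - l1) * l2) by ring.
apply: (le_lt_trans (NcD _ _)).
apply: (le_lt_trans (lerD (lexx _) (NcD _ _))).
rewrite !NcM -/a -/b -/L1 -/L2.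
have hab : a * b <= a by rewrite -{2}(mulr1 a) ler_wpM2l //; lra.
have hb : L1 * b <= L1 * t by rewrite ler_wpM2l //; lra.
have ha : a * L2 <= t * L2 by rewrite ler_wpM2r //; lra.
nra.
Qed.

Lemma lim0_inv (R : rcfType) (g : R[i] -> R[i]) l :
  l != 0 -> lim0 g l -> lim0 (fun h => (g h)^-1) (l^-1).
Proof.
move=> l0 H e e0.
set L := Nc l.
have L0 : 0 < L by rewrite lt_def Nc_eq0 l0 Nc_ge0.
set t := Num.min (L / 2) (e * (L * L) / 2).
have t0 : 0 < t by rewrite lt_min !divr_gt0 // mulr_gt0 // mulr_gt0.
have t1 : t <= L / 2 by rewrite ge_min lexx.
have t2 : t <= e * (L * L) / 2 by rewrite ge_min lexx orbT.
have [d d0 Hd] := H _ t0; exists d => // h h0 hd.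
have a1 := Hd h h0 hd; set a := Nc (g h - l) in a1.
have a0 : 0 <= a by apply: Nc_ge0.
have hL : L <= Nc (g h) + a.
  rewrite /L; have -> : l = g h - (g h - l) by ring.
  by apply: (le_trans (NcD _ _)); rewrite NcN.
have G0 : 0 < Nc (g h) by lra.
have gh0 : g h != 0 by rewrite -Nc_eq0 gt_eqF.
have -> : (g h)^-1 - l^-1 = (l - g h) * ((g h)^-1 * l^-1).
  by field; rewrite gh0 l0.
rewrite NcM NcM !NcV NcB -/a -/L.
set G := Nc (g h) in G0 hL *.
have GL : L / 2 <= G by lra.
rewrite -invfM ltr_pdivrMr ?mulr_gt0 //.
have h2 : a * 2 < e * (L * L) by lra.
have h3 : L * L <= G * L * 2 by nra.
have h4 : e * (L * L) <= e * (G * L * 2) by rewrite ler_wpM2l //; lra.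
nra.
Qed.

Lemma lim0_sum (R : rcfType) (I : Type) (r : seq I) (P : pred I)
  (F : I -> R[i] -> R[i]) (L : I -> R[i]) :
  (forall i, lim0 (F i) (L i)) ->
  lim0 (fun h => \sum_(i <- r | P i) F i h) (\sum_(i <- r | P i) L i).
Proof.
move=> H; elim: r => [|a r IH].
  by rewrite big_nil; apply: (lim0_ext _ (@lim0_const R 0)) => h _; rewrite big_nil.
rewrite big_cons; case Pa: (P a).
  by apply: (lim0_ext _ (lim0_add (H a) IH)) => h _; rewrite big_cons Pa.
by apply: (lim0_ext _ IH) => h _; rewrite big_cons Pa.
Qed.

Lemma lim0_prod (R : rcfType) (I : Type) (r : seq I) (P : pred I)
  (F : I -> R[i] -> R[i]) (L : I -> R[i]) :
  (forall i, lim0 (F i) (L i)) ->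
  lim0 (fun h => \prod_(i <- r | P i) F i h) (\prod_(i <- r | P i) L i).
Proof.
move=> H; elim: r => [|a r IH].
  by rewrite big_nil; apply: (lim0_ext _ (@lim0_const R 1)) => h _; rewrite big_nil.
rewrite big_cons; case Pa: (P a).
  by apply: (lim0_ext _ (lim0_mul (H a) IH)) => h _; rewrite big_cons Pa.
by apply: (lim0_ext _ IH) => h _; rewrite big_cons Pa.
Qed.

Definition sx (R : rcfType) (x : int -> R[i]) (n : int) (h : R[i]) :=
  shift_coord +%R x n h.

Lemma pderivP (R : realType) p q (f : (int -> R[i]) -> 'M[R[i]]_(p, q)) n x D :
  has_pderiv f n x D <->
  forall a b, lim0 (fun h => (f (sx x n h) a b - f x a b) / h) (D a b).
Proof.
split => H a b.
  move=> e e0.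
  have e0' : (0 : R[i]) < (e%:C)%C by rewrite ltcR.
  have [dl dl0 Hd] := H a b _ e0'.
  have dlE : dl = ((complex.Re dl)%:C)%C by rewrite RRe_real // gtr0_real.
  exists (complex.Re dl); first by rewrite -ltcR -dlE.
  move=> h h0 hd; rewrite -ltcR -NcE; apply: Hd => //.
  by rewrite NcE dlE ltcR.
move=> eps eps0.
have epsE : eps = ((complex.Re eps)%:C)%C by rewrite RRe_real // gtr0_real.
have r0 : 0 < complex.Re eps by rewrite -ltcR -epsE.
have [d d0 Hd] := H a b _ r0.
exists (d%:C)%C; first by rewrite ltcR.
move=> h h0 hd; rewrite epsE NcE ltcR; apply: Hd => //.
by rewrite -ltcR -NcE.
Qed.

Definition mlim (R : rcfType) p q (G : R[i] -> 'M[R[i]]_(p, q)) (L : 'M[R[i]]_(p, q)) :=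
  forall a b, lim0 (fun h => G h a b) (L a b).

Lemma mlim_ext (R : rcfType) p q (G1 G2 : R[i] -> 'M[R[i]]_(p, q)) L :
  (forall h, h != 0 -> G1 h = G2 h) -> mlim G1 L -> mlim G2 L.
Proof. by move=> E H a b; apply: (lim0_ext _ (H a b)) => h h0; rewrite E. Qed.

Lemma mlim_eqL (R : rcfType) p q (G : R[i] -> 'M[R[i]]_(p, q)) L1 L2 :
  L1 = L2 -> mlim G L1 -> mlim G L2.
Proof. by move=> ->. Qed.

Lemma mlim_const (R : rcfType) p q (c : 'M[R[i]]_(p, q)) : mlim (fun _ => c) c.
Proof. by move=> a b; apply: lim0_const. Qed.

Lemma mlim_add (R : rcfType) p q (G1 G2 : R[i] -> 'M[R[i]]_(p, q)) L1 L2 :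
  mlim G1 L1 -> mlim G2 L2 -> mlim (fun h => G1 h + G2 h) (L1 + L2).
Proof.
move=> H1 H2 a b; rewrite mxE.
by apply: (lim0_ext _ (lim0_add (H1 a b) (H2 a b))) => h _; rewrite mxE.
Qed.

Lemma mlim_opp (R : rcfType) p q (G : R[i] -> 'M[R[i]]_(p, q)) L :
  mlim G L -> mlim (fun h => - G h) (- L).
Proof.
move=> H a b; rewrite mxE.
by apply: (lim0_ext _ (lim0_opp (H a b))) => h _; rewrite mxE.
Qed.

Lemma mlim_sub (R : rcfType) p q (G1 G2 : R[i] -> 'M[R[i]]_(p, q)) L1 L2 :
  mlim G1 L1 -> mlim G2 L2 -> mlim (fun h => G1 h - G2 h) (L1 - L2).
Proof. by move=> H1 H2; apply: mlim_add => //; apply: mlim_opp. Qed.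

Lemma mlim_mul (R : rcfType) p q r (G1 : R[i] -> 'M[R[i]]_(p, q))
  (G2 : R[i] -> 'M[R[i]]_(q, r)) L1 L2 :
  mlim G1 L1 -> mlim G2 L2 -> mlim (fun h => G1 h *m G2 h) (L1 *m L2).
Proof.
move=> H1 H2 a b; rewrite mxE.
apply: (lim0_ext _ (lim0_sum _ _ (fun j => lim0_mul (H1 a j) (H2 j b)))).
by move=> h _; rewrite mxE.
Qed.

Lemma mlim_scale (R : rcfType) p q (c : R[i] -> R[i]) (G : R[i] -> 'M[R[i]]_(p, q)) l L :
  lim0 c l -> mlim G L -> mlim (fun h => c h *: G h) (l *: L).
Proof.
move=> Hc H a b; rewrite mxE.
by apply: (lim0_ext _ (lim0_mul Hc (H a b))) => h _; rewrite mxE.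
Qed.

Lemma mlim_tr (R : rcfType) p q (G : R[i] -> 'M[R[i]]_(p, q)) L :
  mlim G L -> mlim (fun h => (G h)^T) L^T.
Proof.
by move=> H a b; rewrite mxE; apply: (lim0_ext _ (H b a)) => h _; rewrite mxE.
Qed.

Lemma mlim_ur (R : rcfType) m1 m2 n1 n2 (G : R[i] -> 'M[R[i]]_(m1 + m2, n1 + n2)) L :
  mlim G L -> mlim (fun h => ursubmx (G h)) (ursubmx L).
Proof.
by move=> H a b; rewrite !mxE; apply: (lim0_ext _ (H _ _)) => h _; rewrite !mxE.
Qed.

Lemma mlim_dl (R : rcfType) m1 m2 n1 n2 (G : R[i] -> 'M[R[i]]_(m1 + m2, n1 + n2)) L :
  mlim G L -> mlim (fun h => dlsubmx (G h)) (dlsubmx L).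
Proof.
by move=> H a b; rewrite !mxE; apply: (lim0_ext _ (H _ _)) => h _; rewrite !mxE.
Qed.

Lemma mlim_block (R : rcfType) m1 m2 n1 n2
  (G1 : R[i] -> 'M[R[i]]_(m1, n1)) (G2 : R[i] -> 'M[R[i]]_(m1, n2))
  (G3 : R[i] -> 'M[R[i]]_(m2, n1)) (G4 : R[i] -> 'M[R[i]]_(m2, n2)) L1 L2 L3 L4 :
  mlim G1 L1 -> mlim G2 L2 -> mlim G3 L3 -> mlim G4 L4 ->
  mlim (fun h => block_mx (G1 h) (G2 h) (G3 h) (G4 h)) (block_mx L1 L2 L3 L4).
Proof.
move=> H1 H2 H3 H4 a b.
rewrite -(splitK a) -(splitK b); case: (split a) => a'; case: (split b) => b' /=.
- by rewrite block_mxEul; apply: (lim0_ext _ (H1 a' b')) => h _; rewrite block_mxEul.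
- by rewrite block_mxEur; apply: (lim0_ext _ (H2 a' b')) => h _; rewrite block_mxEur.
- by rewrite block_mxEdl; apply: (lim0_ext _ (H3 a' b')) => h _; rewrite block_mxEdl.
- by rewrite block_mxEdr; apply: (lim0_ext _ (H4 a' b')) => h _; rewrite block_mxEdr.
Qed.

Lemma lim0_det (R : rcfType) n (G : R[i] -> 'M[R[i]]_n) L :
  mlim G L -> lim0 (fun h => \det (G h)) (\det L).
Proof.
move=> H; rewrite /determinant.
have := @lim0_sum R _ (index_enum _) xpredT
  (fun (s : 'S_n) h => (-1) ^+ perm.odd_perm s * \prod_i G h i (s i))
  (fun (s : 'S_n) => (-1) ^+ perm.odd_perm s * \prod_i L i (s i)).
apply.
move=> s; apply: lim0_mul; first exact: lim0_const.
by apply: lim0_prod => i; apply: H.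
Qed.

Lemma mlim_adj (R : rcfType) n (G : R[i] -> 'M[R[i]]_n) L :
  mlim G L -> mlim (fun h => \adj (G h)) (\adj L).
Proof.
move=> H a b; rewrite mxE /cofactor.
apply: (lim0_ext _ (lim0_mul (lim0_const _) (lim0_det (G := fun h => row' b (col' a (G h))) _))).
  by move=> h _; rewrite mxE.
by move=> i j; rewrite !mxE; apply: (lim0_ext _ (H _ _)) => h _; rewrite !mxE.
Qed.

Lemma mlim_inv (R : rcfType) n (G : R[i] -> 'M[R[i]]_n) L :
  (forall h, G h \in unitmx) -> L \in unitmx ->
  mlim G L -> mlim (fun h => invmx (G h)) (invmx L).
Proof.
move=> GU LU H; rewrite /invmx LU.
apply: (mlim_ext _ (mlim_scale (lim0_inv _ (lim0_det H)) (mlim_adj H))).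
  by move=> h _; rewrite GU.
by rewrite -unitfE -unitmxE.
Qed.

Lemma mlim_mxvec (R : rcfType) p q (G : R[i] -> 'M[R[i]]_(p, q)) L :
  mlim G L <-> mlim (fun h => mxvec (G h)) (mxvec L).
Proof.
split=> H a b.
  rewrite (ord1 a); case/mxvec_indexP: b => i j; rewrite mxvecE.
  by apply: (lim0_ext _ (H i j)) => h _; rewrite mxvecE.
by move: (H 0 (mxvec_index a b)); rewrite mxvecE; apply: lim0_ext => h _; rewrite mxvecE.
Qed.

Definition dq (R : realType) p q (f : (int -> R[i]) -> 'M[R[i]]_(p, q)) n x h :=
  h^-1 *: (f (sx x n h) - f x).

Lemma hpP (R : realType) p q (f : (int -> R[i]) -> 'M[R[i]]_(p, q)) n x D :
  has_pderiv f n x D <-> mlim (dq f n x) D.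
Proof.
rewrite pderivP; split=> H a b.
  by apply: (lim0_ext _ (H a b)) => h _; rewrite /dq !mxE mulrC.
by apply: (lim0_ext _ (H a b)) => h _; rewrite /dq !mxE mulrC.
Qed.

Lemma hp_cont (R : realType) p q (f : (int -> R[i]) -> 'M[R[i]]_(p, q)) n x D :
  has_pderiv f n x D -> mlim (fun h => f (sx x n h)) (f x).
Proof.
move/hpP => H.
have := mlim_add (mlim_const (f x)) (mlim_scale (@lim0_id R) H).
rewrite scale0r addr0; apply: mlim_ext => h h0.
by rewrite /dq scalerA divff // scale1r addrC subrK.
Qed.

Lemma hp_const (R : realType) p q (c : 'M[R[i]]_(p, q)) n x :
  has_pderiv (fun _ => c) n x 0.
Proof.
apply/hpP; apply: (mlim_ext _ (mlim_const 0)) => h _.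
by rewrite /dq subrr scaler0.
Qed.

Lemma hp_add (R : realType) p q (f g : (int -> R[i]) -> 'M[R[i]]_(p, q)) n x Df Dg :
  has_pderiv f n x Df -> has_pderiv g n x Dg ->
  has_pderiv (fun y => f y + g y) n x (Df + Dg).
Proof.
move=> /hpP Hf /hpP Hg; apply/hpP; apply: (mlim_ext _ (mlim_add Hf Hg)) => h _.
by rewrite /dq -scalerDr; congr (_ *: _); rewrite opprD addrACA.
Qed.

Lemma hp_opp (R : realType) p q (f : (int -> R[i]) -> 'M[R[i]]_(p, q)) n x Df :
  has_pderiv f n x Df -> has_pderiv (fun y => - f y) n x (- Df).
Proof.
move=> /hpP Hf; apply/hpP; apply: (mlim_ext _ (mlim_opp Hf)) => h _.
by rewrite /dq -scalerN opprB opprK addrC.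
Qed.

Lemma hp_sub (R : realType) p q (f g : (int -> R[i]) -> 'M[R[i]]_(p, q)) n x Df Dg :
  has_pderiv f n x Df -> has_pderiv g n x Dg ->
  has_pderiv (fun y => f y - g y) n x (Df - Dg).
Proof. by move=> Hf Hg; apply: hp_add => //; apply: hp_opp. Qed.

Lemma hp_mul (R : realType) p q r (f : (int -> R[i]) -> 'M[R[i]]_(p, q))
  (g : (int -> R[i]) -> 'M[R[i]]_(q, r)) n x Df Dg :
  has_pderiv f n x Df -> has_pderiv g n x Dg ->
  has_pderiv (fun y => f y *m g y) n x (Df *m g x + f x *m Dg).
Proof.
move=> Hf Hg; have Hgc := hp_cont Hg.
move: Hf Hg => /hpP Hf /hpP Hg; apply/hpP.
apply: (mlim_ext _ (mlim_add (mlim_mul Hf Hgc) (mlim_mul (mlim_const (f x)) Hg))).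
move=> h _; rewrite /dq -scalemxAl -scalemxAr -scalerDr; congr (_ *: _).
by rewrite mulmxBl mulmxBr addrA subrK.
Qed.

Lemma hp_tr (R : realType) p q (f : (int -> R[i]) -> 'M[R[i]]_(p, q)) n x Df :
  has_pderiv f n x Df -> has_pderiv (fun y => (f y)^T) n x Df^T.
Proof.
move=> /hpP Hf; apply/hpP; apply: (mlim_ext _ (mlim_tr Hf)) => h _.
by rewrite /dq linearZ /= linearB.
Qed.

Lemma hp_inv (R : realType) p (f : (int -> R[i]) -> 'M[R[i]]_p) n x Df :
  (forall y, f y \in unitmx) ->
  has_pderiv f n x Df ->
  has_pderiv (fun y => invmx (f y)) n x (- (invmx (f x) *m Df *m invmx (f x))).
Proof.
move=> U Hf; have Hc := hp_cont Hf.
have Hic := mlim_inv (fun h => U _) (U x) Hc.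
move/hpP: Hf => Hf; apply/hpP.
apply: (mlim_ext _ (mlim_opp (mlim_mul (mlim_mul Hic Hf) (mlim_const (invmx (f x)))))).
move=> h _; rewrite /dq -scalemxAr -scalemxAl -scalerN; congr (_ *: _).
rewrite mulmxBr mulmxBl opprB.
by rewrite -mulmxA mulmxV ?U // mulmx1 mulVmx ?U // mul1mx.
Qed.

Lemma horner_mx_comm (F : fieldType) p q (A : 'M[F]_p.+1) (B : 'M[F]_q.+1) X (r : {poly F}) :
  A *m X = X *m B -> horner_mx A r *m X = X *m horner_mx B r.
Proof.
move=> E; elim/poly_ind: r => [|r c IH]; first by rewrite !rmorph0 mul0mx mulmx0.
rewrite !rmorphD !rmorphM /= !horner_mx_X !horner_mx_C -!mulmxE.
rewrite mulmxDl mulmxDr -mulmxA E mulmxA IH -mulmxA.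
by rewrite scalar_mxC.
Qed.

Lemma sylv_inj (F : closedFieldType) p q (A : 'M[F]_p) (B : 'M[F]_q)
  (hAB : forall a, eigenvalue B a -> ~~ eigenvalue A a) X :
  A *m X = X *m B -> X = 0.
Proof.
case: q B X hAB => [|q] B X hAB E; first by rewrite thinmx0.
case: p A X hAB E => [|p] A X hAB E; first by rewrite flatmx0.
have H := horner_mx_comm (char_poly B) E.
rewrite Cayley_Hamilton mulmx0 in H.
have [rs Hrs] := closed_field_poly_normal (char_poly B).
move: Hrs; rewrite (monicP (char_poly_monic B)) scale1r => Hrs.
have U : horner_mx A (char_poly B) \in unitmx.
  rewrite Hrs rmorph_prod /= big_seq.
  apply: (big_ind (fun M : 'M_p.+1 => M \in unitmx)).
  - exact: unitmx1.
  - by move=> M1 M2 U1 U2; rewrite -mulmxE unitmx_mul U1 U2.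
  move=> z zr.
  have eB : eigenvalue B z by rewrite eigenvalue_root_char Hrs root_prod_XsubC.
  have := hAB z eB; rewrite /eigenvalue negbK kermx_eq0 row_free_unit.
  by rewrite rmorphB /= horner_mx_X horner_mx_C.
by move: H => /(congr1 (mulmx (invmx (horner_mx A (char_poly B))))); rewrite mulmxA mulVmx // mul1mx mulmx0.
Qed.

Definition sylv (F : fieldType) p q (K1 : 'M[F]_p) (K2 : 'M[F]_q) (X : 'M[F]_(p, q)) :=
  K1 *m X - X *m K2.

Fact sylv_is_linear (F : fieldType) p q (K1 : 'M[F]_p) (K2 : 'M[F]_q) :
  linear (sylv K1 K2).
Proof.
move=> a X Y; rewrite /sylv mulmxDr mulmxDl -scalemxAr -scalemxAl.
rewrite scalerBr; rewrite addrACA opprD; congr (_ + _).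
Qed.

HB.instance Definition _ (F : fieldType) p q (K1 : 'M[F]_p) (K2 : 'M[F]_q) :=
  GRing.isLinear.Build F 'M[F]_(p, q) 'M[F]_(p, q) _ (sylv K1 K2) (sylv_is_linear K1 K2).

Lemma sylv_lim (R : rcfType) p q (K1 : 'M[R[i]]_p) (K2 : 'M[R[i]]_q)
  (inj : forall X, sylv K1 K2 X = 0 -> X = 0) (G : R[i] -> 'M[R[i]]_(p, q)) L :
  mlim (fun h => sylv K1 K2 (G h)) (sylv K1 K2 L) -> mlim G L.
Proof.
move=> H.
set T := lin_mx (sylv K1 K2).
have TU : T \in unitmx.
  rewrite -row_free_unit; apply: inj_row_free => v.
  rewrite mul_rV_lin => /eqP; rewrite mxvec_eq0 => /eqP /inj /eqP.
  by rewrite vec_mx_eq0 => /eqP.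
have E X : mxvec X = mxvec (sylv K1 K2 X) *m invmx T.
  by rewrite -mul_vec_lin mulmxK.
apply/(mlim_mxvec G L); rewrite (E L).
apply: (mlim_ext _ (mlim_mul (proj1 (mlim_mxvec _ _) H) (mlim_const (invmx T)))).
by move=> h _; rewrite (E (G h)).
Qed.

Lemma zmod1 (V : zmodType) (a b c : V) : a - ((b - c) + (a - c)) + b = c *+ 2.
Proof. by rewrite opprD !opprB addrA addrC !addrA subrK addrC addrA -addrA subrK mulr2n. Qed.

Lemma algX (F : fieldType) N (A P W Mx : 'M[F]_N) :
  A *m P = P *m A -> W *m (1%:M + Mx) = 1%:M -> (1%:M + Mx) *m W = 1%:M ->
  P *m A *m W - W *m (A *m P *m Mx + Mx *m P *m A) *m W + W *m A *m P
  = (W *m A *m P *m W) *+ 2.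
Proof.
move=> AP H1 H2.
have WM : W *m Mx = 1%:M - W by rewrite -H1 mulmxDr mulmx1 addrAC subrr add0r.
have MW : Mx *m W = 1%:M - W by rewrite -H2 mulmxDl mul1mx addrAC subrr add0r.
rewrite mulmxDr mulmxDl.
have -> : W *m (A *m P *m Mx) *m W = W *m A *m P - W *m A *m P *m W.
  by rewrite -!mulmxA MW !mulmxBr !mulmx1.
have -> : W *m (Mx *m P *m A) *m W = P *m A *m W - W *m A *m P *m W.
  by rewrite !mulmxA WM !mulmxBl !mul1mx -[W *m P *m A]mulmxA -AP !mulmxA.
exact: zmod1.
Qed.

Lemma alg_u (F : fieldType) N k (A P W Mx : 'M[F]_N) (r : 'M[F]_(N, k)) (sT : 'M[F]_(k, N)) :
  A *m P = P *m A -> W *m (1%:M + Mx) = 1%:M -> (1%:M + Mx) *m W = 1%:M ->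
  (sT *m P *m A *m W + sT *m - (W *m (A *m P *m Mx + Mx *m P *m A) *m W)) *m r
    + sT *m W *m (A *m P *m r)
  = sT *m W *m A *m P *m W *m r + sT *m W *m A *m P *m W *m r.
Proof.
move=> AP H1 H2.
transitivity (sT *m (P *m A *m W - W *m (A *m P *m Mx + Mx *m P *m A) *m W
   + W *m A *m P) *m r).
  by rewrite !mulmxDr !mulmxDl !mulmxN !mulNmx !mulmxA.
by rewrite algX // mulr2n mulmxDr mulmxDl !mulmxA.
Qed.

Lemma alg_v (F : fieldType) N k (A Q W Mx Ki : 'M[F]_N) (r : 'M[F]_(N, k)) (sT : 'M[F]_(k, N)) :
  A *m Q = Q *m A -> Ki *m A = A *m Ki -> Ki *m Q = Q *m Ki ->
  W *m (1%:M + Mx) = 1%:M -> (1%:M + Mx) *m W = 1%:M ->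
  0 - (((sT *m Q *m A *m W + sT *m - (W *m (A *m Q *m Mx + Mx *m Q *m A) *m W)) *m Ki
          + sT *m W *m 0) *m r + sT *m W *m Ki *m (A *m Q *m r))
  = - (sT *m W *m A *m Q *m W *m Ki *m r + sT *m W *m A *m Q *m W *m Ki *m r).
Proof.
move=> AQ KA KQ H1 H2.
rewrite sub0r mulmx0 addr0; congr (- _).
have -> : sT *m W *m Ki *m (A *m Q *m r) = sT *m (W *m A *m Q) *m Ki *m r.
  have E : Ki *m (A *m (Q *m r)) = A *m (Q *m (Ki *m r)).
    by rewrite !mulmxA KA -(mulmxA A Ki Q) KQ !mulmxA.
  by rewrite -!mulmxA E.
transitivity (sT *m (Q *m A *m W - W *m (A *m Q *m Mx + Mx *m Q *m A) *m W
   + W *m A *m Q) *m Ki *m r).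
  by rewrite !mulmxDr !mulmxDl !mulmxN !mulNmx !mulmxA.
by rewrite algX // mulr2n mulmxDr !mulmxDl !mulmxA.
Qed.

Lemma alg_final (F : fieldType) N k (K A P W Mx : 'M[F]_N) (r : 'M[F]_(N, k)) (sT : 'M[F]_(k, N)) :
  K \in unitmx -> K *m Mx - Mx *m K = r *m sT ->
  W *m (1%:M + Mx) = 1%:M -> (1%:M + Mx) *m W = 1%:M ->
  - (sT *m W *m A *m (P *m K) *m W *m invmx K *m r + sT *m W *m A *m (P *m K) *m W *m invmx K *m r)
    *m invmx (1%:M - sT *m W *m invmx K *m r)
  = - (sT *m W *m A *m P *m W *m r + sT *m W *m A *m P *m W *m r).
Proof.
move=> KU Syl H1 H2.
set Ki := invmx K.
have KKi : K *m Ki = 1%:M by rewrite mulmxV.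
have KiK : Ki *m K = 1%:M by rewrite mulVmx.
have WM : W *m Mx = 1%:M - W by rewrite -H1 mulmxDr mulmx1 addrAC subrr add0r.
have MW : Mx *m W = 1%:M - W by rewrite -H2 mulmxDl mul1mx addrAC subrr add0r.
set v := 1%:M - _.
have vU : v *m (1%:M + sT *m Ki *m W *m r) = 1%:M.
  rewrite /v mulmxBl mul1mx mulmxDr mulmx1.
  have -> : sT *m W *m Ki *m r *m (sT *m Ki *m W *m r)
      = sT *m (W *m (Ki *m (r *m sT) *m Ki) *m W) *m r by rewrite !mulmxA.
  have -> : Ki *m (r *m sT) *m Ki = Mx *m Ki - Ki *m Mx.
    by rewrite -Syl mulmxBr mulmxBl !mulmxA KiK mul1mx -!mulmxA KKi mulmx1.
  have -> : W *m (Mx *m Ki - Ki *m Mx) *m W = Ki *m W - W *m Ki.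
    rewrite mulmxBr mulmxBl !mulmxA WM -!mulmxA MW mulmxBl mulmxBr !mul1mx !mulmx1.
    by rewrite mulmxBr !mulmxA opprB addrA subrK.
  rewrite mulmxBr mulmxBl !mulmxA.
  by rewrite addrCA subrr addr0 addrK.
have vu : v \in unitmx by case: (mulmx1_unit vU).
have c1E : sT *m W *m A *m (P *m K) *m W *m Ki *m r
         = sT *m W *m A *m P *m W *m r *m v.
  rewrite /v mulmxBr mulmx1.
  have -> : sT *m W *m A *m P *m W *m r *m (sT *m W *m Ki *m r)
     = sT *m W *m A *m P *m (W *m (r *m sT) *m W) *m Ki *m r by rewrite !mulmxA.
  have -> : W *m (r *m sT) *m W = W *m K - K *m W.
    rewrite -Syl mulmxBr mulmxBl -!mulmxA MW [W *m (Mx *m _)]mulmxA WM.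
    by rewrite !mulmxBr !mulmx1 mulmxBl mul1mx !mulmxA opprB addrA subrK.
  rewrite mulmxBr !mulmxBl.
  have -> : sT *m W *m A *m P *m (W *m K) *m Ki *m r = sT *m W *m A *m P *m W *m r.
    by rewrite -!mulmxA (mulKVmx KU).
  by rewrite !mulmxA opprB addrC subrK.
rewrite c1E -mulmxDl mulNmx mulmxK //.
Qed.

Lemma mxpown_comm (F : fieldType) N (K B : 'M[F]_N) k :
  B *m K = K *m B -> B *m mxpown K k = mxpown K k *m B.
Proof.
move=> BK; elim: k => [|k IH]; first by rewrite /= mulmx1 mul1mx.
by rewrite /= mulmxA BK -mulmxA IH mulmxA.
Qed.

Lemma mxpown_tr (F : fieldType) N (K : 'M[F]_N) k :
  mxpown K^T k = (mxpown K k)^T.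
Proof.
elim: k => [|k IH]; first by rewrite /= trmx1.
by rewrite /= IH -trmx_mul (mxpown_comm k (erefl (K *m K))).
Qed.

Lemma inv_comm (F : fieldType) N (K B : 'M[F]_N) :
  K \in unitmx -> B *m K = K *m B -> B *m invmx K = invmx K *m B.
Proof.
move=> KU BK.
by rewrite -[invmx K *m B]mulmx1 -(mulmxV KU) !mulmxA -(mulmxA _ B K) BK !mulmxA mulVmx // mul1mx.
Qed.

Lemma mxpowz_comm (F : fieldType) N (K B : 'M[F]_N) z :
  K \in unitmx -> B *m K = K *m B -> B *m mxpowz K z = mxpowz K z *m B.
Proof.
move=> KU BK; case: z => k; rewrite /mxpowz; first exact: mxpown_comm.
by apply: mxpown_comm; apply: inv_comm.
Qed.

Lemma mxpowzS (F : fieldType) N (K : 'M[F]_N) z :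
  K \in unitmx -> mxpowz K (z + 1) = mxpowz K z *m K.
Proof.
move=> KU; case: z => k.
  have -> : (Posz k + 1 = Posz k.+1)%R by rewrite -addn1 PoszD.
  by rewrite /= (mxpown_comm k (erefl (K *m K))).
case: k => [|k].
  have -> : (Negz 0 + 1 = 0)%R by [].
  by rewrite /= mulmx1 mulVmx.
have -> : (Negz k.+1 + 1 = Negz k)%R by rewrite !NegzE; lia.
have KKi : K *m invmx K = invmx K *m K by rewrite mulmxV // mulVmx.
by rewrite /= -!mulmxA -(mxpown_comm k KKi) (mulKmx KU).
Qed.

Lemma mxpowz_tr (F : fieldType) N (K : 'M[F]_N) z :
  mxpowz K^T z = (mxpowz K z)^T.
Proof. by case: z => k; rewrite /mxpowz -?trmx_inv mxpown_tr. Qed.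

Lemma blk_sylv (F : fieldType) N1 N2 (K1 : 'M[F]_N1) (K2 : 'M[F]_N2) X Y :
  block_mx K1 0 0 K2 *m block_mx 0 X Y 0 - block_mx 0 X Y 0 *m block_mx K1 0 0 K2
  = block_mx 0 (sylv K1 K2 X) (sylv K2 K1 Y) 0.
Proof.
rewrite !mulmx_block !mulmx0 !mul0mx !addr0 !add0r opp_block_mx add_block_mx.
by rewrite /sylv !oppr0 !addr0.
Qed.

Lemma negeq0 (F : numFieldType) p q (X : 'M[F]_(p, q)) : X = - X -> X = 0.
Proof.
move/eqP; rewrite -subr_eq0 opprK -mulr2n -scaler_nat scaler_eq0 pnatr_eq0 /=.
by move/eqP.
Qed.

Lemma offdiag (F : numFieldType) N1 N2 (E : 'M[F]_(N1 + N2)) :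
  block_mx 1%:M 0 0 (- 1%:M) *m E = - (E *m block_mx 1%:M 0 0 (- 1%:M)) ->
  E = block_mx 0 (ursubmx E) (dlsubmx E) 0.
Proof.
rewrite -[E]submxK !mulmx_block !mulmx0 !mul0mx !addr0 !add0r !mul1mx !mulmx1.
rewrite !mulNmx !mulmxN !mul1mx !mulmx1 opp_block_mx !opprK.
move/eq_block_mx => [h1 _ _ h4].
rewrite block_mxKur block_mxKdl (negeq0 h1).
by rewrite (negeq0 (esym h4)).
Qed.

Lemma zz (V : zmodType) (a b c d : V) : a - b - (c - d) = a - c - (b - d).
Proof.
rewrite -!addrA; congr (_ + _).
rewrite !opprB [LHS]addrCA [RHS]addrCA; congr (_ + _); exact: addrC.
Qed.

Lemma sylvZB (F : fieldType) p q (K1 : 'M[F]_p) (K2 : 'M[F]_q) c X Y :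
  sylv K1 K2 (c *: (X - Y)) = c *: (sylv K1 K2 X - sylv K1 K2 Y).
Proof.
rewrite /sylv -scalemxAr -scalemxAl -scalerBr mulmxBr mulmxBl; congr (_ *: _).
exact: zz.
Qed.

Lemma hp_offdiag (R : realType) N1 N2 (K1 : 'M[R[i]]_N1) (K2 : 'M[R[i]]_N2)
  (inj1 : forall X, sylv K1 K2 X = 0 -> X = 0)
  (inj2 : forall X, sylv K2 K1 X = 0 -> X = 0)
  (M1 : (int -> R[i]) -> 'M[R[i]]_(N1, N2)) (M2 : (int -> R[i]) -> 'M[R[i]]_(N2, N1))
  m x E1 E2 DQ :
  has_pderiv (fun y => block_mx K1 0 0 K2 *m block_mx 0 (M1 y) (M2 y) 0
                     - block_mx 0 (M1 y) (M2 y) 0 *m block_mx K1 0 0 K2) m x DQ ->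
  block_mx K1 0 0 K2 *m block_mx 0 E1 E2 0 - block_mx 0 E1 E2 0 *m block_mx K1 0 0 K2 = DQ ->
  has_pderiv (fun y => block_mx 0 (M1 y) (M2 y) 0) m x (block_mx 0 E1 E2 0).
Proof.
move=> /hpP H HE.
rewrite blk_sylv in HE.
have dqB h : dq (fun y => block_mx 0 (M1 y) (M2 y) 0) m x h
    = block_mx 0 (dq M1 m x h) (dq M2 m x h) 0.
  by rewrite /dq opp_block_mx add_block_mx scale_block_mx !subr0 !scaler0.
have Hq h : dq (fun y => block_mx K1 0 0 K2 *m block_mx 0 (M1 y) (M2 y) 0
                     - block_mx 0 (M1 y) (M2 y) 0 *m block_mx K1 0 0 K2) m x h
   = block_mx 0 (sylv K1 K2 (dq M1 m x h)) (sylv K2 K1 (dq M2 m x h)) 0.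
  by rewrite /dq !blk_sylv opp_block_mx add_block_mx scale_block_mx !subr0 !scaler0 !sylvZB.
have H1 : mlim (dq M1 m x) E1.
  apply: (sylv_lim inj1); have := mlim_ur H; rewrite -HE block_mxKur.
  by apply: mlim_ext => h _; rewrite Hq block_mxKur.
have H2 : mlim (dq M2 m x) E2.
  apply: (sylv_lim inj2); have := mlim_dl H; rewrite -HE block_mxKdl.
  by apply: mlim_ext => h _; rewrite Hq block_mxKdl.
apply/hpP.
apply: (mlim_ext _ (mlim_block (mlim_const 0) H1 H2 (mlim_const 0))).
by move=> h _; rewrite dqB.
Qed.

Lemma hp_eqD (R : realType) p q (f : (int -> R[i]) -> 'M[R[i]]_(p, q)) n x D1 D2 :
  has_pderiv f n x D1 -> D1 = D2 -> has_pderiv f n x D2.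
Proof. by move=> H <-. Qed.

Lemma hp_ext (R : realType) p q (f g : (int -> R[i]) -> 'M[R[i]]_(p, q)) n x D :
  (forall y, f y = g y) -> has_pderiv f n x D -> has_pderiv g n x D.
Proof. by move=> E H a b e e0; have [d d0 Hd] := H a b e e0; exists d => // h h0 hd; rewrite -!E; apply: Hd. Qed.

Lemma algAE (F : fieldType) N (A P Mx : 'M[F]_N) :
  A *m A = 1%:M -> A *m P = P *m A -> A *m Mx = - (Mx *m A) ->
  A *m (A *m P *m Mx + Mx *m P *m A) = - ((A *m P *m Mx + Mx *m P *m A) *m A).
Proof.
move=> AA AP AM.
have MA : Mx *m A = - (A *m Mx) by rewrite AM opprK.
have APA : A *m (P *m A) = P by rewrite -AP mulmxA AA mul1mx.
apply: (@etrans _ _ (P *m Mx - Mx *m P)).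
  rewrite mulmxDr !mulmxA AA mul1mx AM.
  by rewrite !mulNmx -!mulmxA APA.
rewrite mulmxDl -!mulmxA MA mulmxN AA mulmx1 mulmxN (mulmxA P A Mx) (mulmxA A (P *m A) Mx) APA.
by rewrite opprD opprK.
Qed.

Lemma algKE (F : fieldType) N k (K A P Mx : 'M[F]_N) (r : 'M[F]_(N, k)) (sT : 'M[F]_(k, N)) :
  A *m K = K *m A -> K *m P = P *m K -> K *m Mx - Mx *m K = r *m sT ->
  K *m (A *m P *m Mx + Mx *m P *m A) - (A *m P *m Mx + Mx *m P *m A) *m K
  = A *m P *m r *m sT + r *m (sT *m P *m A).
Proof.
move=> AK KP Syl.
have KAP : K *m A *m P = A *m P *m K by rewrite -AK -mulmxA KP mulmxA.
have PAK : P *m (A *m K) = K *m (P *m A) by rewrite AK mulmxA -KP mulmxA.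
have t1 : K *m (A *m P *m Mx) = A *m P *m (K *m Mx).
  by rewrite !mulmxA KAP.
have t2 : K *m (Mx *m P *m A) = K *m Mx *m (P *m A) by rewrite !mulmxA.
have t3 : A *m P *m Mx *m K = A *m P *m (Mx *m K) by rewrite !mulmxA.
have t4 : Mx *m P *m A *m K = Mx *m K *m (P *m A) by rewrite -!mulmxA PAK.
transitivity (A *m P *m (K *m Mx - Mx *m K) + (K *m Mx - Mx *m K) *m (P *m A)).
  by rewrite mulmxDr mulmxDl opprD addrACA mulmxBr mulmxBl t1 t2 t3 t4.
by rewrite Syl !mulmxA.
Qed.

Theorem theorem1 (R : realType) (N1 N2 : nat) (hN1 : (0 < N1)%N) (hN2 : (0 < N2)%N)
  (K1 : 'M[R[i]]_N1) (K2 : 'M[R[i]]_N2)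
  (hK1 : K1 \in unitmx) (hK2 : K2 \in unitmx)
  (hK12 : forall a : R[i], eigenvalue K1 a -> ~~ eigenvalue K2 a)
  (M1 : (int -> R[i]) -> 'M[R[i]]_(N1, N2))
  (M2 : (int -> R[i]) -> 'M[R[i]]_(N2, N1))
  (r1 s1 : (int -> R[i]) -> 'cV[R[i]]_N1)
  (r2 s2 : (int -> R[i]) -> 'cV[R[i]]_N2) :
  let K : 'M[R[i]]_(N1 + N2) := block_mx K1 0 0 K2 in
  let M : (int -> R[i]) -> 'M[R[i]]_(N1 + N2) :=
    fun x => block_mx 0 (M1 x) (M2 x) 0 in
  let A : 'M[R[i]]_(N1 + N2) := block_mx 1%:M 0 0 (- 1%:M) in
  let r : (int -> R[i]) -> 'M[R[i]]_(N1 + N2, 1 + 1) :=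
    fun x => block_mx (r1 x) 0 0 (r2 x) in
  let s : (int -> R[i]) -> 'M[R[i]]_(N1 + N2, 1 + 1) :=
    fun x => block_mx 0 (s1 x) (s2 x) 0 in
  (forall x, K *m M x - M x *m K = r x *m (s x)^T) ->
  (forall x (n : int), has_pderiv r n x (A *m mxpowz K n *m r x)) ->
  (forall x (n : int), has_pderiv s n x (A *m mxpowz K^T n *m s x)) ->
  (forall x, (1%:M + M x) \in unitmx) ->
  let u : (int -> R[i]) -> 'M[R[i]]_(1 + 1) :=
    fun x => (s x)^T *m invmx (1%:M + M x) *m r x in
  let v : (int -> R[i]) -> 'M[R[i]]_(1 + 1) :=
    fun x => 1%:M - (s x)^T *m invmx (1%:M + M x) *m invmx K *m r x in
  forall (x : int -> R[i]) (n : int),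
    exists Dv Du : 'M[R[i]]_(1 + 1),
      [/\ has_pderiv v (n + 1) x Dv, has_pderiv u n x Du &
          Dv *m invmx (v x) = - Du].
Proof.
move=> K M A r s Syl Dr Ds SU u v x n.
have KU : K \in unitmx by rewrite unitmxE /K det_ublock unitrM -!unitmxE hK1 hK2.
have AK : A *m K = K *m A.
  by rewrite /A /K !mulmx_block !mulmx0 !mul0mx !addr0 !add0r !mul1mx !mulmx1 mulNmx mulmxN mul1mx mulmx1.
have AT : A^T = A by rewrite /A tr_block_mx !trmx0 trmx1 linearN /= trmx1.
have AM y : A *m M y = - (M y *m A).
  rewrite /A /M !mulmx_block !mulmx0 !mul0mx !addr0 !add0r !mul1mx !mulmx1.
  by rewrite !mulNmx !mulmxN !mul1mx !mulmx1 opp_block_mx !oppr0 opprK.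
have AA : A *m A = 1%:M.
  rewrite /A !mulmx_block !mulmx0 !mul0mx !addr0 !add0r !mul1mx mulmxN mulmx1 opprK.
  by rewrite [RHS](scalar_mx_block N1 N2).
have inj1 : forall X, sylv K1 K2 X = 0 -> X = 0.
  move=> X /eqP; rewrite subr_eq0 => /eqP; apply: sylv_inj => a e2.
  by apply/negP => e1; move: (hK12 a e1); rewrite e2.
have inj2 : forall X, sylv K2 K1 X = 0 -> X = 0.
  by move=> X /eqP; rewrite subr_eq0 => /eqP; apply: sylv_inj.
have DsT y m : has_pderiv (fun y => (s y)^T) m y ((s y)^T *m mxpowz K m *m A).
  apply: (hp_eqD (hp_tr (Ds y m))).
  by rewrite mxpowz_tr !trmx_mul trmxK AT mulmxA.
have DM m : has_pderiv M m x (A *m mxpowz K m *m M x + M x *m mxpowz K m *m A).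
  set P := mxpowz K m.
  have KP : K *m P = P *m K by apply: mxpowz_comm.
  have AP : A *m P = P *m A by apply: mxpowz_comm.
  set E := _ + _.
  have AE : A *m E = - (E *m A).
    by apply: algAE => //; apply: AM.
  rewrite (offdiag AE).
  apply: (hp_offdiag inj1 inj2 (DQ := A *m P *m r x *m (s x)^T + r x *m ((s x)^T *m P *m A))).
    by apply: (hp_ext (fun y => esym (Syl y))); apply: hp_mul; [apply: Dr | apply: DsT].
  rewrite -(offdiag AE).
  by apply: algKE => //; apply: Syl.
have DW m : has_pderiv (fun y => invmx (1%:M + M y)) m x
   (- (invmx (1%:M + M x) *m (A *m mxpowz K m *m M x + M x *m mxpowz K m *m A)
        *m invmx (1%:M + M x))).
  apply: (hp_inv SU); apply: (hp_eqD (hp_add (hp_const 1%:M m x) (DM m))).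
  by rewrite add0r.
set W := invmx (1%:M + M x).
have H1 : W *m (1%:M + M x) = 1%:M by rewrite mulVmx.
have H2 : (1%:M + M x) *m W = 1%:M by rewrite mulmxV.
set P := mxpowz K n.
have KP : K *m P = P *m K by apply: mxpowz_comm.
have AP : A *m P = P *m A by apply: mxpowz_comm.
set sT := (s x)^T.
exists (- (sT *m W *m A *m (P *m K) *m W *m invmx K *m r x
          + sT *m W *m A *m (P *m K) *m W *m invmx K *m r x)).
exists (sT *m W *m A *m P *m W *m r x + sT *m W *m A *m P *m W *m r x).
split.
- apply: (hp_eqD (hp_sub (hp_const 1%:M (n + 1) x)
     (hp_mul (hp_mul (hp_mul (DsT x (n + 1)) (DW (n + 1))) (hp_const (invmx K) (n + 1) x))
        (Dr x (n + 1))))).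
  rewrite (mxpowzS n KU) -/P.
  apply: alg_v => //.
  + by rewrite mulmxA AP -mulmxA AK mulmxA.
  + by rewrite (inv_comm KU AK).
  + have KiK : invmx K *m K = K *m invmx K by rewrite mulVmx // mulmxV.
    have KiP : invmx K *m P = P *m invmx K by apply: mxpowz_comm.
    by rewrite mulmxA KiP -mulmxA KiK mulmxA.
- apply: (hp_eqD (hp_mul (hp_mul (DsT x n) (DW n)) (Dr x n))).
  exact: alg_u.
- by apply: alg_final => //; apply: Syl.
Qed.
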